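(* For $K\in\mathbb R^{m\times L(m+r)}$, the matrix $\hat\Theta_K=P^\top(\Theta+\Pi K)P$ is Schur if and only if $J(K)$ is finite.
   Context: System $\Sigma_s$: $x(t+1)=Ax(t)+Bu(t)$, $y(t)=Cx(t)$, $t\ge0$, $x\in\mathbb R^n,u\in\mathbb R^m,y\in\mathbb R^r$; standing assumptions: $(A,B,C)$ minimal, $A$ Schur. $\mathcal R_L=[A^{L-1}B,\dots,B]$, $\mathcal O_L=[C^\top,\dots,(CA^{L-1})^\top]^\top$, $\mathcal H_L$ the $Lr\times Lm$ block lower-triangular Toeplitz matrix with $(i,j)$ block $H_{i-j}$, $H_0=0$, $H_k=CA^{k-1}B$. Fix $L$ with $\operatorname{rank}\mathcal O_L=n$. IOH $v(t)=[u(t-L)^\top,\dots,u(t-1)^\top,y(t-L)^\top,\dots,y(t-1)^\top]^\top$, $t\ge L$. $\Gamma=[\mathcal R_L-A^L\mathcal O_L^\dagger\mathcal H_L,\ A^L\mathcal O_L^\dagger]$; $\Theta=\mathrm{diag}(S_m,S_r)+EC\Gamma$, with $S_k$ the $Lk\times Lk$ block matrix having $I_k$ in blocks $(i,i+1)$, $i<L$, zeros elsewhere, $E$ having $I_r$ in its last $r$ rows, zeros elsewhere; $\Pi$ has $I_m$ in rows $(L-1)m+1,\dots,Lm$, zeros elsewhere. IOH system: $v(t+1)=\Theta v(t)+\Pi u(t)$, $y=C\Gamma v$, $t\ge L$. $\mathscr P=\mathrm{im}[\Theta^{L(m+r)-1}\Pi,\dots,\Pi]$; $P\in\mathbb R^{L(m+r)\times(Lm+n)}$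 with $\mathrm{im}P=\mathscr P$, $P^\top P=I$. $\Phi\ge0$ with $\mathrm{im}\Phi=\mathscr P$, $Q>0$, $R>0$; $\mathcal N_\Phi$ a Gaussian with second moment about zero $\Phi$. $J(K)=\mathbb E_{v(L)\sim\mathcal N_\Phi}[\sum_{t=L}^\infty y(t)^\top Qy(t)+u(t)^\top Ru(t)]$ with $u(t)=Kv(t)$, $t\ge L$. *)

(* Defs.v *)
From HB Require Import structures.
From mathcomp Require Import all_boot all_order all_algebra.
From mathcomp Require Import all_classical all_reals all_analysis.
From mathcomp Require Import complex.

Set Implicit Arguments.
Unset Strict Implicit.
Unset Printing Implicit Defensive.

Import Order.TTheory GRing.Theory Num.Theory.
Local Open Scope classical_set_scope.
Local Open Scope ring_scope.

(* Block-index helpers: an index i : 'I_(L*k) is viewed as the pair    *)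
(* (block i %/ k : 'I_L, offset i %% k : 'I_k), blocks numbered 0..L-1 *)
(* from the top/left.                                                  *)

Lemma blk_idx_lt (L k : nat) (i : 'I_(L * k)) : (i %/ k < L)%N.
Proof.
case: k i => [|k] i; first by case: i => i; rewrite muln0.
by rewrite ltn_divLR // ltn_ord.
Qed.

Lemma blk_off_lt (L k : nat) (i : 'I_(L * k)) : (i %% k < k)%N.
Proof.
case: k i => [|k] i; first by case: i => i; rewrite muln0.
by rewrite ltn_mod.
Qed.

Definition blk_idx (L k : nat) (i : 'I_(L * k)) : 'I_L := Ordinal (blk_idx_lt i).
Definition blk_off (L k : nat) (i : 'I_(L * k)) : 'I_k := Ordinal (blk_off_lt i).

Definition blockmx {R : Type} (L p q : nat) (f : 'I_L -> 'I_L -> 'M[R]_(p, q))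
  : 'M[R]_(L * p, L * q) :=
  \matrix_(i, j) f (blk_idx i) (blk_idx j) (blk_off i) (blk_off j).

Definition blockrow {R : Type} (L p q : nat) (f : 'I_L -> 'M[R]_(p, q))
  : 'M[R]_(p, L * q) :=
  \matrix_(i, j) f (blk_idx j) i (blk_off j).

Definition blockcol {R : Type} (L p q : nat) (f : 'I_L -> 'M[R]_(p, q))
  : 'M[R]_(L * p, q) :=
  \matrix_(i, j) f (blk_idx i) (blk_off i) j.

Section Defs.
Variable R : realType.

Definition schur (k : nat) (M : 'M[R]_k) : Prop :=
  forall z : R[i], root (char_poly (map_mx (fun x : R => (x%:C)%C) M)) z ->
    `|z| < 1.

Definition psd (k : nat) (M : 'M[R]_k) : Prop :=
  M^T = M /\ forall x : 'cV[R]_k, 0 <= (x^T *m M *m x) 0 0.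

Definition pd (k : nat) (M : 'M[R]_k) : Prop :=
  M^T = M /\ forall x : 'cV[R]_k, x != 0 -> 0 < (x^T *m M *m x) 0 0.

(* column space (image) equality: im M = im N *)
Definition same_image (p q1 q2 : nat) (M : 'M[R]_(p, q1)) (N : 'M[R]_(p, q2))
  : Prop := (M^T == N^T)%MS.

(* Moore-Penrose pseudo-inverse of a matrix with full column rank *)
Definition pinv_fcr (p q : nat) (M : 'M[R]_(p, q)) : 'M[R]_(q, p) :=
  invmx (M^T *m M) *m M^T.

Variables (n m r : nat).

Definition ctrb_mx (A : 'M[R]_n) (B : 'M[R]_(n, m)) : 'M[R]_(n, n * m) :=
  blockrow (fun j : 'I_n => A ^+ j *m B).
Definition obsv_mx (A : 'M[R]_n) (C : 'M[R]_(r, n)) : 'M[R]_(n * r, n) :=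
  blockcol (fun i : 'I_n => C *m A ^+ i).

Definition minimal (A : 'M[R]_n) (B : 'M[R]_(n, m)) (C : 'M[R]_(r, n)) : Prop :=
  \rank (ctrb_mx A B) = n /\ \rank (obsv_mx A C) = n.

Variable L : nat.

Definition RL (A : 'M[R]_n) (B : 'M[R]_(n, m)) : 'M[R]_(n, L * m) :=
  blockrow (fun j : 'I_L => A ^+ (L.-1 - j) *m B).
Definition OL (A : 'M[R]_n) (C : 'M[R]_(r, n)) : 'M[R]_(L * r, n) :=
  blockcol (fun i : 'I_L => C *m A ^+ i).
Definition HL (A : 'M[R]_n) (B : 'M[R]_(n, m)) (C : 'M[R]_(r, n))
  : 'M[R]_(L * r, L * m) :=
  blockmx (fun i j : 'I_L => if (j < i)%N then C *m A ^+ (i - j).-1 *m B else 0).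

Definition Gamma (A : 'M[R]_n) (B : 'M[R]_(n, m)) (C : 'M[R]_(r, n))
  : 'M[R]_(n, L * m + L * r) :=
  row_mx (RL A B - A ^+ L *m pinv_fcr (OL A C) *m HL A B C)
         (A ^+ L *m pinv_fcr (OL A C)).

Definition Sk (k : nat) : 'M[R]_(L * k) :=
  blockmx (fun i j : 'I_L => if (j == i.+1 :> nat) then 1%:M else 0).

Definition Emx : 'M[R]_(L * m + L * r, r) :=
  col_mx 0 (blockcol (fun i : 'I_L => if (i == L.-1 :> nat) then 1%:M else 0)).

Definition Pimx : 'M[R]_(L * m + L * r, m) :=
  col_mx (blockcol (fun i : 'I_L => if (i == L.-1 :> nat) then 1%:M else 0)) 0.

Definition Theta (A : 'M[R]_n) (B : 'M[R]_(n, m)) (C : 'M[R]_(r, n))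
  : 'M[R]_(L * m + L * r) :=
  block_mx (Sk m) 0 0 (Sk r) + Emx *m C *m Gamma A B C.

(* [Theta^{L(m+r)-1} Pi, ..., Pi] ; its image is the subspace 𝒫 *)
Definition ctrb_ioh (A : 'M[R]_n) (B : 'M[R]_(n, m)) (C : 'M[R]_(r, n))
  : 'M[R]_(L * m + L * r, (L * m + L * r) * m) :=
  blockrow
    (fun j : 'I_(L * m + L * r) => Theta A B C ^+ ((L * m + L * r).-1 - j) *m Pimx).

Definition Acl (A : 'M[R]_n) (B : 'M[R]_(n, m)) (C : 'M[R]_(r, n))
  (K : 'M[R]_(m, L * m + L * r)) : 'M[R]_(L * m + L * r) :=
  Theta A B C + Pimx *m K.

Definition stage_cost (A : 'M[R]_n) (B : 'M[R]_(n, m)) (C : 'M[R]_(r, n))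
  (Q : 'M[R]_r) (Rw : 'M[R]_m) (K : 'M[R]_(m, L * m + L * r))
  (v : 'cV[R]_(L * m + L * r)) : R :=
  let y := C *m Gamma A B C *m v in
  let u := K *m v in
  (y^T *m Q *m y + u^T *m Rw *m u) 0 0.

(* J(K) = E[ sum_{t >= L} y(t)^T Q y(t) + u(t)^T R u(t) ], where
   v(L) = v0 and v(L+k) = (Theta + Pi K)^k v(L). *)
Definition Jcost (d : measure_display) (T : measurableType d)
  (Pr : probability T R) (v0 : T -> 'cV[R]_(L * m + L * r))
  (A : 'M[R]_n) (B : 'M[R]_(n, m)) (C : 'M[R]_(r, n))
  (Q : 'M[R]_r) (Rw : 'M[R]_m) (K : 'M[R]_(m, L * m + L * r)) : \bar R :=
  (\int[Pr]_x (\sum_(0 <= k <oo)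
      (stage_cost A B C Q Rw K (Acl A B C K ^+ k *m v0 x))%:E))%E.

End Defs.

(* A Gaussian random vector v0 on (T, Pr) with second moment (about zero)
   Phi: components are measurable, every linear functional w v0 is
   normally distributed (possibly degenerate, i.e. a Dirac mass), and
   E[v0 v0^T] = Phi. *)
Definition gaussian_second_moment {R : realType} (N : nat)
  (d : measure_display) (T : measurableType d) (Pr : probability T R)
  (v0 : T -> 'cV[R]_N) (Phi : 'M[R]_N) : Prop :=
  [/\ (forall i : 'I_N, measurable_fun setT (fun x => v0 x i 0)),
      (forall w : 'rV[R]_N, exists (mu s : R),
         forall A : set R, measurable A ->
           Pr ((fun x => (w *m v0 x) 0 0) @^-1` A) =
           (if s == 0 then \d_mu A else normal_prob mu s A)) &
      (forall i j : 'I_N,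
         Pr.-integrable setT (fun x => (v0 x i 0 * v0 x j 0)%:E) /\
         (\int[Pr]_x (v0 x i 0 * v0 x j 0)%:E = (Phi i j)%:E)%E)].

(* Main.v *)
Require Import Defs.
From HB Require Import structures.
From mathcomp Require Import all_boot all_order all_algebra.
From mathcomp Require Import all_classical all_reals all_analysis.
From mathcomp Require Import complex.
From mathcomp Require Import zify ring lra.
From Stdlib Require Import Lia.

Set Implicit Arguments.
Unset Strict Implicit.
Unset Printing Implicit Defensive.
Import Order.TTheory GRing.Theory Num.Theory.
Local Open Scope ring_scope.
Section BSum.
Variable F : numFieldType.
Implicit Types (u v : nat -> F).

Definition bsum (u : nat -> F) := exists M : F, forall N, \sum_(k < N) `|u k| <= M.

Lemma bsum_bound u : bsum u -> exists B : F, forall k, `|u k| <= B.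
Proof.
move=> [M hM]; exists M => k; apply: le_trans (hM k.+1).
rewrite big_ord_recr /= lerDr; apply: sumr_ge0 => i _; exact: normr_ge0.
Qed.

Lemma bsum_M_ge0 u M : (forall N, \sum_(k < N) `|u k| <= M) -> 0 <= M.
Proof. by move=> h; have := h 0%N; rewrite big_ord0. Qed.

Lemma bsum0 : bsum (fun _ => 0).
Proof. by exists 0 => N; rewrite big1 // => i _; rewrite normr0. Qed.

Lemma bsumD u v : bsum u -> bsum v -> bsum (fun k => u k + v k).
Proof.
move=> [M hM] [M' hM']; exists (M + M') => N.
apply: le_trans (lerD (hM N) (hM' N)); rewrite -big_split /=.
by apply: ler_sum => i _; apply: ler_normD.
Qed.

Lemma bsumZ c u : bsum u -> bsum (fun k => c * u k).
Proof.
move=> [M hM]; exists (`|c| * M) => N.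
under eq_bigr do rewrite normrM. rewrite -mulr_sumr.
by apply: ler_wpM2l => //; apply: normr_ge0.
Qed.

Lemma bsumM u v : bsum u -> bsum v -> bsum (fun k => u k * v k).
Proof.
move=> hu [M hM]; have [B hB] := bsum_bound hu.
exists (B * M) => N.
apply: le_trans (_ : \sum_(k < N) B * `|v k| <= _).
  apply: ler_sum => i _; rewrite normrM; apply: ler_wpM2r => //.
rewrite -mulr_sumr; apply: ler_wpM2l => //.
exact: le_trans (normr_ge0 _) (hB 0%N).
Qed.

Lemma bsum_sum (I : Type) (s : seq I) (u : I -> nat -> F) :
  (forall i, bsum (u i)) -> bsum (fun k => \sum_(i <- s) u i k).
Proof.
move=> h; elim: s => [|a s ih].
  by under eq_fun do rewrite big_nil; exact: bsum0.
under eq_fun do rewrite big_cons; exact: bsumD.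
Qed.

Lemma bsum_ext u v : (forall k, u k = v k) -> bsum u -> bsum v.
Proof. by move=> e [M hM]; exists M => N; under eq_bigr do rewrite -e. Qed.

Lemma bsum_eq u v : bsum u -> (forall k, u k = v k) -> bsum v.
Proof. by move=> h e; apply: bsum_ext h. Qed.

Lemma bsum_rec (a b : nat -> F) (lam : F) : `|lam| < 1 -> bsum b ->
  (forall k, a k.+1 = lam * a k + b k) -> bsum a.
Proof.
move=> hl [B hB] hrec.
have hl0 : 0 < 1 - `|lam| by rewrite subr_gt0.
have B0 : 0 <= B := bsum_M_ge0 hB.
pose S N := \sum_(k < N) `|a k|.
have S0 N : 0 <= S N by apply: sumr_ge0 => i _; exact: normr_ge0.
have SS N : S N <= S N.+1.
  by rewrite /S big_ord_recr /= lerDl normr_ge0.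
have key N : S N.+1 <= (`|a 0%N| + B) / (1 - `|lam|).
  rewrite ler_pdivlMr // mulrBr mulr1 lerBlDr.
  have e : S N.+1 = `|a 0%N| + \sum_(k < N) `|a k.+1| by rewrite /S big_ord_recl.
  have h1 : \sum_(k < N) `|a k.+1| <= `|lam| * S N + B.
    apply: le_trans (_ : \sum_(k < N) (`|lam| * `|a k| + `|b k|) <= _).
      by apply: ler_sum => i _; rewrite hrec; apply: le_trans (ler_normD _ _) _;
        rewrite normrM.
    rewrite big_split /= -mulr_sumr; apply: lerD; [exact: lexx | exact: hB].
  rewrite {1}e; apply: le_trans (lerD (lexx _) h1) _.
  rewrite -[X in _ <= X]addrA lerD2l [X in _ <= X]addrC lerD2r [X in _ <= X]mulrC.
  apply: ler_wpM2l; [exact: normr_ge0 | exact: SS].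
exists ((`|a 0%N| + B) / (1 - `|lam|)) => N.
exact: le_trans (SS N) (key N).
Qed.

End BSum.
Section Powers.
Variable F : numClosedFieldType.

Lemma pow_bsum_gen N' (A : 'M[F]_N'.+1) (s : seq F) :
  (forall z, z \in s -> `|z| < 1) ->
  forall p (X : 'M[F]_(N'.+1, p)),
  horner_mx A (\prod_(z <- s) ('X - z%:P)) *m X = 0 ->
  forall i j, bsum (fun k => (A ^+ k *m X) i j).
Proof.
elim: s => [|z s ih] hs p X.
  rewrite big_nil rmorph1 mul1mx => -> i j.
  by apply: bsum_ext (@bsum0 F) => k; rewrite mulmx0 mxE.
rewrite big_cons mulrC rmorphM /= -mulmxA => hX i j.
have hY := ih (fun w hw => hs w (mem_behead (s := z :: s) hw)) _ _ hX.
apply: (@bsum_rec F _ (fun k => (A ^+ k *m (horner_mx A ('X - z%:P) *m X)) i j) z).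
- by apply: hs; rewrite inE eqxx.
- exact: hY i j.
- move=> k.
  have -> : A ^+ k.+1 *m X = z *: (A ^+ k *m X) + A ^+ k *m (horner_mx A ('X - z%:P) *m X).
    rewrite rmorphB /= horner_mx_X horner_mx_C mulmxBl mulmxBr mul_scalar_mx.
    by rewrite -scalemxAr addrC subrK exprSr mulmxA.
  by rewrite !mxE.
Qed.

Lemma pow_bsum N (A : 'M[F]_N) :
  (forall z, root (char_poly A) z -> `|z| < 1) ->
  forall i j, bsum (fun k => (A ^+ k) i j).
Proof.
case: N A => [|N'] A hA i j; first by case: i.
have [rs hrs] := closed_field_poly_normal (char_poly A).
have hm := char_poly_monic A; rewrite (monicP hm) scale1r in hrs.
have h := @pow_bsum_gen N' A rs _ _ 1%:M.
apply: bsum_ext (h _ _ i j) => [k|z zin|]; first by rewrite mulmx1.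
  by apply: hA; rewrite hrs root_prod_XsubC.
by rewrite -hrs Cayley_Hamilton mul0mx.
Qed.

End Powers.
Section RealPowers.
Variable R : realType.
Local Notation toC := (real_complex R).

Lemma map_mxX_gen (S : comNzRingType) (f : {rmorphism R -> S}) N (M : 'M[R]_N) k :
  map_mx f (M ^+ k) = (map_mx f M) ^+ k.
Proof.
elim: k => [|k ih]; first by rewrite !expr0; apply/matrixP => i j; rewrite !mxE rmorph_nat.
by rewrite !exprS -ih; exact: map_mxM.
Qed.

Lemma normC_real (x : R) : `|(x%:C)%C| = (`|x|%:C)%C.
Proof. by rewrite normc_def /= expr0n /= addr0 sqrtr_sqr. Qed.

Lemma bsum_real (u : nat -> R) : bsum (fun k => (u k)%:C%C) -> bsum u.
Proof.
move=> [M hM]; exists (complex.Re M) => N; have := hM N.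
under eq_bigr do rewrite normC_real.
rewrite -(rmorph_sum toC) lecE => /andP[_].
by [].
Qed.

Lemma schur_bsum N (M : 'M[R]_N) : schur M ->
  forall i j, bsum (fun k => (M ^+ k) i j).
Proof.
move=> hS i j; apply: bsum_real.
have := @pow_bsum (R[i]) N (map_mx toC M) hS i j.
apply: bsum_ext => k; rewrite -map_mxX_gen mxE //.
Qed.

End RealPowers.
Section Blocks.

Lemma blk_pair_lt (L k : nat) (j : 'I_L) (a : 'I_k) : (j * k + a < L * k)%N.
Proof.
have ha := ltn_ord a; have hj := ltn_ord j.
apply: (@leq_trans (j.+1 * k)); first by rewrite mulSn addnC ltn_add2r.
by rewrite leq_mul2r hj orbT.
Qed.

Definition blk_pair (L k : nat) (j : 'I_L) (a : 'I_k) : 'I_(L * k) :=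
  Ordinal (blk_pair_lt j a).

Lemma blk_idx_pair (L k : nat) (j : 'I_L) (a : 'I_k) : blk_idx (blk_pair j a) = j.
Proof.
apply: val_inj => /=; have ha := ltn_ord a.
by rewrite divnMDl ?divn_small ?addn0 //; apply: leq_ltn_trans ha.
Qed.

Lemma blk_off_pair (L k : nat) (j : 'I_L) (a : 'I_k) : blk_off (blk_pair j a) = a.
Proof. by apply: val_inj => /=; rewrite modnMDl modn_small. Qed.

Lemma row_blockcol (R : Type) L p q (G : 'I_L -> 'M[R]_(p, q)) b :
  row b (blockcol G) = row (blk_off b) (G (blk_idx b)).
Proof. by apply/rowP => c; rewrite !mxE. Qed.

Lemma sub_blockcol (F : fieldType) L p q (G : 'I_L -> 'M[F]_(p, q)) j :
  (G j <= blockcol G)%MS.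
Proof.
apply/row_subP => a; have := row_blockcol G (blk_pair j a).
rewrite blk_idx_pair blk_off_pair => <-; exact: row_sub.
Qed.

Lemma blockcol_sub (F : fieldType) L p q n2 (G : 'I_L -> 'M[F]_(p, q))
  (B : 'M[F]_(n2, q)) : (forall j, (G j <= B)%MS) -> (blockcol G <= B)%MS.
Proof.
move=> h; apply/row_subP => b; rewrite row_blockcol.
exact: submx_trans (row_sub _ _) (h _).
Qed.

Lemma tr_blockrow (R : Type) L p q (f : 'I_L -> 'M[R]_(p, q)) :
  (blockrow f)^T = blockcol (fun j => (f j)^T).
Proof. by apply/matrixP => i j; rewrite !mxE. Qed.

Lemma blockcol_mulmx (R : pzRingType) L p q s (G : 'I_L -> 'M[R]_(p, q))
  (M : 'M[R]_(q, s)) : blockcol G *m M = blockcol (fun j => G j *m M).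
Proof.
by apply/matrixP => i j; rewrite !mxE; apply: eq_bigr => k _; rewrite mxE.
Qed.

Lemma CH_pow (F : comNzRingType) N' (M : 'M[F]_N'.+1) :
  M ^+ N'.+1 = - \sum_(i < N'.+1) (char_poly M)`_i *: M ^+ i.
Proof.
have h := Cayley_Hamilton M.
rewrite -(coefK (char_poly M)) poly_def size_char_poly rmorph_sum big_ord_recr /= in h.
have c1 : (char_poly M)`_N'.+1 = 1.
  by have := char_poly_monic M; rewrite monicE lead_coefE size_char_poly => /eqP.
move: h; rewrite horner_mxZ rmorphXn /= horner_mx_X c1 scale1r => /eqP.
rewrite addrC addr_eq0 => /eqP ->; congr (- _).
by apply: eq_bigr => i _; rewrite horner_mxZ rmorphXn /= horner_mx_X.
Qed.

Lemma ctrb_pow_sub (F : fieldType) N p (Th : 'M[F]_N) (Pi : 'M[F]_(N, p)) e :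
  ((Th ^+ e *m Pi)^T <= (blockrow (fun j : 'I_N => Th ^+ (N.-1 - j) *m Pi))^T)%MS.
Proof.
case: N Th Pi => [|N'] Th Pi.
  by rewrite [(_ ^+ _ *m _)^T]thinmx0 sub0mx.
rewrite tr_blockrow.
set G := (fun j : 'I_N'.+1 => _).
have small e' : (e' <= N')%N -> ((Th ^+ e' *m Pi)^T <= blockcol G)%MS.
  move=> he'; have hj : (N' - e' < N'.+1)%N by rewrite ltnS leq_subr.
  have := sub_blockcol G (Ordinal hj); rewrite /G /= subKn //.
suff h : forall E e, (e <= E)%N -> ((Th ^+ e *m Pi)^T <= blockcol G)%MS.
  exact: h (leqnn e).
elim=> [|E ih] {}e he.
  by apply: small; move: he; rewrite leqn0 => /eqP ->.
case: (leqP e N') => hle; first exact: small.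
have -> : Th ^+ e *m Pi = \sum_(i < N'.+1)
    (- (char_poly Th)`_i) *: (Th ^+ (e - N'.+1 + i) *m Pi).
  rewrite -(subnK hle) exprD CH_pow mulrN mulr_sumr mulNmx mulmx_suml -sumrN.
  apply: eq_bigr => i _; rewrite scaleNr -scalerAr -exprD scalemxAl.
  by rewrite addnK.
rewrite raddf_sum /=; apply: summx_sub => i _; rewrite linearZ /=.
apply: scalemx_sub; apply: ih.
have := ltn_ord i; move: he hle => he hle hi; lia.
Qed.

Lemma ctrb_stable (F : fieldType) N p q (Th : 'M[F]_N) (Pi : 'M[F]_(N, p))
  (K : 'M[F]_(p, N)) (P : 'M[F]_(N, q)) :
  (P^T == (blockrow (fun j : 'I_N => Th ^+ (N.-1 - j) *m Pi))^T)%MS ->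
  exists D : 'M[F]_q, (Th + Pi *m K) *m P = P *m D.
Proof.
set X := blockrow _ => /andP[hPX hXP].
have hX : (X^T *m (Th + Pi *m K)^T <= X^T)%MS.
  rewrite raddfD /= mulmxDr; apply: addmx_sub.
    rewrite /X tr_blockrow blockcol_mulmx; apply: blockcol_sub => j.
    rewrite -trmx_mul mulmxA.
    have -> : Th *m Th ^+ (N.-1 - j) = Th ^+ (N.-1 - j).+1 by rewrite exprS.
    by have := ctrb_pow_sub Th Pi (N.-1 - j).+1; rewrite tr_blockrow.
  rewrite trmx_mul mulmxA; apply: submx_trans (submxMl _ _) _.
  have := ctrb_pow_sub Th Pi 0; rewrite expr0 mul1mx //.
have h1 : (P^T *m (Th + Pi *m K)^T <= P^T)%MS.
  apply: submx_trans (submxMr _ hPX) _; exact: submx_trans hX hXP.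
have [D hD] := submxP h1; exists D^T.
by apply: trmx_inj; rewrite trmx_mul hD trmx_mul trmxK.
Qed.

End Blocks.
Section Nilp.
Variable F : pzRingType.

Definition supper N (M : 'M[F]_N) := forall a b : 'I_N, M a b != 0 -> (a < b)%N.

Lemma supper_pow N (M : 'M[F]_N) : supper M ->
  forall j (a b : 'I_N), (M ^+ j) a b != 0 -> (a + j <= b)%N.
Proof.
move=> hM; elim=> [|j ih] a b.
  rewrite expr0 mxE addn0; have [->|ne] := eqVneq a b; first by [].
  by rewrite eqxx.
rewrite exprSr mxE => hne.
case: (pickP (fun c => (M ^+ j) a c * M c b != 0)) => [c hc | h0]; last first.
  exfalso; move/negP: hne; apply; apply/eqP; rewrite big1 // => c _.
  by have := h0 c; move/negbFE/eqP.
have h1 : (M ^+ j) a c != 0 by apply: contraNneq hc => ->; rewrite mul0r.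
have h2 : M c b != 0 by apply: contraNneq hc => ->; rewrite mulr0.
have := ih _ _ h1; have := hM _ _ h2; lia.
Qed.

Lemma supper_nil N (M : 'M[F]_N) : supper M -> M ^+ N = 0.
Proof.
move=> hM; apply/matrixP => a b; rewrite [RHS]mxE; apply/eqP; apply: contraT => h.
have := supper_pow hM h; have := ltn_ord b; lia.
Qed.

Lemma block_supper p q (A : 'M[F]_p) (D : 'M[F]_q) :
  supper A -> supper D -> supper (block_mx A 0 0 D).
Proof.
move=> hA hD a b; rewrite -(splitK a) -(splitK b).
case: (fintype.split a) => aa; case: (fintype.split b) => bb /=;
  rewrite ?block_mxEul ?block_mxEur ?block_mxEdl ?block_mxEdr ?mxE ?eqxx //.
- by move/hA.
by move/hD; rewrite ltn_add2l.
Qed.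

End Nilp.

Lemma Sk_supper (R : realType) L k : supper (Sk R L k).
Proof.
move=> a b; rewrite /Sk /blockmx mxE; case: ifP => h; last by rewrite mxE eqxx.
rewrite mxE; have [e|ne] := eqVneq (blk_off a) (blk_off b); last by rewrite eqxx.
move=> _; move/eqP: h => /= hb; move: e => /(congr1 val) /= e.
have ea := divn_eq a k; have eb := divn_eq b k.
have hk := blk_off_lt a.
rewrite ea eb hb e mulSn; lia.
Qed.
Definition qf (R : pzRingType) N (M : 'M[R]_N) (x : 'cV[R]_N) : R :=
  (x^T *m M *m x) 0 0.
Definition frob (R : pzRingType) N (M Phi : 'M[R]_N) : R :=
  \sum_j \sum_i M i j * Phi i j.

Lemma qf_expand (R : comPzRingType) N (M : 'M[R]_N) x :
  qf M x = \sum_j \sum_i M i j * (x i 0 * x j 0).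
Proof.
rewrite /qf !mxE; apply: eq_bigr => j _; rewrite !mxE mulr_suml.
by apply: eq_bigr => i _; rewrite !mxE; ring.
Qed.

Section Moment.
Local Open Scope ereal_scope.
Variables (R : realType) (N : nat) (d : measure_display) (T : measurableType d).
Variables (Pr : probability T R) (v0 : T -> 'cV[R]_N) (Phi : 'M[R]_N).
Hypothesis hint : forall i j : 'I_N,
  Pr.-integrable setT (fun x => (v0 x i 0 * v0 x j 0)%:E) /\
  \int[Pr]_x (v0 x i 0 * v0 x j 0)%:E = (Phi i j)%:E.

Lemma moment_integrable (M : 'M[R]_N) :
  Pr.-integrable setT (fun x => (qf M (v0 x))%:E).
Proof.
apply: (eq_integrable measurableT
   (fun x => \sum_j \sum_i (M i j)%:E * (v0 x i 0 * v0 x j 0)%:E)).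
  by move=> x _; rewrite qf_expand -sumEFin; apply: eq_bigr => j _;
    rewrite -sumEFin; apply: eq_bigr => i _; rewrite EFinM.
apply: (integrable_sum measurableT) => j _; apply: (integrable_sum measurableT) => i _.
by apply: (integrableZl measurableT); exact: (hint i j).1.
Qed.

Lemma moment (M : 'M[R]_N) :
  \int[Pr]_x (qf M (v0 x))%:E = (frob M Phi)%:E.
Proof.
transitivity (\int[Pr]_x
   (\sum_j \sum_i (M i j)%:E * (v0 x i 0 * v0 x j 0)%:E)).
  by apply: eq_integral => x _; rewrite qf_expand -sumEFin; apply: eq_bigr => j _;
    rewrite -sumEFin; apply: eq_bigr => i _; rewrite EFinM.
rewrite integral_sum //; try exact: measurableT; last first.
  move=> j; apply: (integrable_sum measurableT) => i _.
  by apply: (integrableZl measurableT); exact: (hint i j).1.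
rewrite /frob -sumEFin; apply: eq_bigr => j _.
rewrite integral_sum //; try exact: measurableT; last first.
  by move=> i; apply: (integrableZl measurableT); exact: (hint i j).1.
rewrite -sumEFin; apply: eq_bigr => i _.
rewrite (integralZl measurableT); last exact: (hint i j).1.
by rewrite (hint i j).2 EFinM.
Qed.

Lemma moment_nonneg (M : 'M[R]_N) : (forall x, (0 <= qf M x)%R) ->
  (0 <= frob M Phi)%R.
Proof.
move=> h; rewrite -lee_fin -moment; apply: integral_ge0 => x _.
by rewrite lee_fin.
Qed.

End Moment.
Section QF.
Variable R : realFieldType.
Implicit Types (N : nat).

Definition bl N (M : 'M[R]_N) (x y : 'cV[R]_N) : R := (x^T *m M *m y) 0 0.

Lemma qf_bl N (M : 'M[R]_N) x : qf M x = bl M x x. Proof. by []. Qed.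

Lemma blDl N (M : 'M[R]_N) x y z : bl M (x + y) z = bl M x z + bl M y z.
Proof. by rewrite /bl raddfD /= !mulmxDl mxE. Qed.
Lemma blDr N (M : 'M[R]_N) x y z : bl M z (x + y) = bl M z x + bl M z y.
Proof. by rewrite /bl !mulmxDr mxE. Qed.
Lemma blZl N (M : 'M[R]_N) a x z : bl M (a *: x) z = a * bl M x z.
Proof. by rewrite /bl linearZ /= -!scalemxAl mxE. Qed.
Lemma blZr N (M : 'M[R]_N) a x z : bl M z (a *: x) = a * bl M z x.
Proof. by rewrite /bl -!scalemxAr mxE. Qed.

Lemma bl_sym N (M : 'M[R]_N) x y : M^T = M -> bl M x y = bl M y x.
Proof.
move=> hM; rewrite /bl -[in LHS](trmxK (x^T *m M *m y)) [in LHS]mxE.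
by rewrite !trmx_mul trmxK hM mulmxA.
Qed.

Lemma qf_comb N (M : 'M[R]_N) a b x y : M^T = M ->
  qf M (a *: x + b *: y) = a ^+ 2 * qf M x + 2 * a * b * bl M x y + b ^+ 2 * qf M y.
Proof.
move=> hM; rewrite !qf_bl !blDl !blDr !blZl !blZr (bl_sym x y hM); ring.
Qed.

Lemma CS N (M : 'M[R]_N) x y : M^T = M -> (forall z, 0 <= qf M z) ->
  bl M x y ^+ 2 <= qf M x * qf M y.
Proof.
move=> hM hpos.
have hx := hpos x; have hy := hpos y.
set B := bl M x y; set qx := qf M x; set qy := qf M y.
have key t s : 0 <= t ^+ 2 * qx + 2 * t * s * B + s ^+ 2 * qy.
  by have := hpos (t *: x + s *: y); rewrite qf_comb.
have [qy0|qypos] := eqVneq qy 0.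
  have := key (B ^+ 2) (- B * (qx + 1)); rewrite qy0.
  have -> : (B ^+ 2) ^+ 2 * qx + 2 * B ^+ 2 * (- B * (qx + 1)) * B +
    (- B * (qx + 1)) ^+ 2 * 0 = - (B ^+ 4 * (qx + 2)) by ring.
  rewrite oppr_ge0 mulr0 => h.
  have h4 : B ^+ 4 <= 0.
    by rewrite -(pmulr_lle0 _ (_ : 0 < qx + 2)) //; apply: ltr_wpDl hx _.
  have : B ^+ 4 = (B ^+ 2) ^+ 2 by rewrite -exprM.
  nra.
have qyp : 0 < qy by rewrite lt_def qypos hy.
have := key qy (- B); nra.
Qed.

Lemma qf_sum N (M1 M2 : 'M[R]_N) x : qf (M1 + M2) x = qf M1 x + qf M2 x.
Proof. by rewrite /qf mulmxDr mulmxDl mxE. Qed.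

Lemma qf_congr N p (X : 'M[R]_(p, N)) (Q : 'M[R]_p) x :
  qf (X^T *m Q *m X) x = qf Q (X *m x).
Proof. by rewrite /qf trmx_mul !mulmxA. Qed.

End QF.
Section Cplx.
Variable R : realType.
Local Notation toC := (real_complex R).
Local Notation Rec := (@complex.Re R).
Local Notation Imc := (@complex.Im R).

Lemma Re_add (x y : R[i]) : Rec (x + y) = Rec x + Rec y. Proof. by case: x; case: y. Qed.
Lemma Im_add (x y : R[i]) : Imc (x + y) = Imc x + Imc y. Proof. by case: x; case: y. Qed.
Lemma Re_sum (I : Type) (s : seq I) (f : I -> R[i]) :
  Rec (\sum_(i <- s) f i) = \sum_(i <- s) Rec (f i).
Proof. by apply: (big_morph Rec Re_add). Qed.
Lemma Im_sum (I : Type) (s : seq I) (f : I -> R[i]) :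
  Imc (\sum_(i <- s) f i) = \sum_(i <- s) Imc (f i).
Proof. by apply: (big_morph Imc Im_add). Qed.
Lemma Re_rmul (a : R) (y : R[i]) : Rec ((a%:C)%C * y) = a * Rec y.
Proof. by case: y => c e /=; rewrite mul0r subr0. Qed.
Lemma Im_rmul (a : R) (y : R[i]) : Imc ((a%:C)%C * y) = a * Imc y.
Proof. by case: y => c e /=; rewrite mul0r ?add0r ?addr0. Qed.
Lemma Re_mul (z y : R[i]) : Rec (z * y) = Rec z * Rec y - Imc z * Imc y.
Proof. by case: z; case: y. Qed.
Lemma Im_mul (z y : R[i]) : Imc (z * y) = Imc z * Rec y + Rec z * Imc y.
Proof. by case: z => a b; case: y => c e /=; rewrite addrC. Qed.

Lemma ReM p N q (M : 'M[R]_(p, N)) (v : 'M[R[i]]_(N, q)) :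
  map_mx Rec (map_mx toC M *m v) = M *m map_mx Rec v.
Proof.
apply/matrixP => i j; rewrite !mxE Re_sum; apply: eq_bigr => k _.
by rewrite !mxE Re_rmul.
Qed.

Lemma ImM p N q (M : 'M[R]_(p, N)) (v : 'M[R[i]]_(N, q)) :
  map_mx Imc (map_mx toC M *m v) = M *m map_mx Imc v.
Proof.
apply/matrixP => i j; rewrite !mxE Im_sum; apply: eq_bigr => k _.
by rewrite !mxE Im_rmul.
Qed.

Lemma cmx_eq0 p q (v : 'M[R[i]]_(p, q)) :
  map_mx Rec v = 0 -> map_mx Imc v = 0 -> v = 0.
Proof.
move=> /matrixP hr /matrixP hi; apply/matrixP => i j.
have := hr i j; have := hi i j; rewrite !mxE.
by case: (v i j) => a b /= -> ->.
Qed.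

Lemma Re_scale p q (z : R[i]) (v : 'M[R[i]]_(p, q)) :
  map_mx Rec (z *: v) = Rec z *: map_mx Rec v - Imc z *: map_mx Imc v.
Proof. by apply/matrixP => i j; rewrite !mxE Re_mul. Qed.

Lemma Im_scale p q (z : R[i]) (v : 'M[R[i]]_(p, q)) :
  map_mx Imc (z *: v) = Imc z *: map_mx Rec v + Rec z *: map_mx Imc v.
Proof. by apply/matrixP => i j; rewrite !mxE Im_mul. Qed.

Lemma map_mxC_inj p q (M : 'M[R]_(p, q)) : map_mx toC M = 0 -> M = 0.
Proof.
move=> /matrixP h; apply/matrixP => i j; have := h i j; rewrite !mxE.
by case.
Qed.

End Cplx.
Lemma char_poly_trmx (F : comNzRingType) n (M : 'M[F]_n) :
  char_poly M^T = char_poly M.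
Proof.
rewrite /char_poly -det_tr; congr (\det _); apply/matrixP => i j.
by rewrite !mxE eq_sym.
Qed.

Section FrobLemmas.
Variable R : comPzRingType.
Implicit Types (N : nat).

Lemma frob_tr N (M X : 'M[R]_N) : frob M X = \tr (M^T *m X).
Proof.
rewrite /frob /mxtrace; apply: eq_bigr => j _; rewrite mxE.
by apply: eq_bigr => i _; rewrite mxE.
Qed.

Lemma frobB N (M1 M2 X : 'M[R]_N) : frob (M1 - M2) X = frob M1 X - frob M2 X.
Proof.
rewrite /frob -sumrB; apply: eq_bigr => j _; rewrite -sumrB.
by apply: eq_bigr => i _; rewrite !mxE mulrBl.
Qed.

Lemma frobZ N c (M X : 'M[R]_N) : frob (c *: M) X = c * frob M X.
Proof.
rewrite /frob mulr_sumr; apply: eq_bigr => j _; rewrite mulr_sumr.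
by apply: eq_bigr => i _; rewrite !mxE mulrA.
Qed.

Lemma qfB N (M1 M2 : 'M[R]_N) x : qf (M1 - M2) x = qf M1 x - qf M2 x.
Proof. by rewrite /qf mulmxBr mulmxBl !mxE. Qed.

Lemma qfZ N c (M : 'M[R]_N) x : qf (c *: M) x = c * qf M x.
Proof. by rewrite /qf -scalemxAr -scalemxAl !mxE. Qed.

Lemma frob_outer N (l : 'cV[R]_N) (X : 'M[R]_N) : frob (l *m l^T) X = qf X l.
Proof.
rewrite qf_expand /frob; apply: eq_bigr => j _; apply: eq_bigr => i _.
by rewrite !mxE big_ord1 !mxE mulrC.
Qed.

Lemma qf_outer N (l : 'cV[R]_N) x : qf (l *m l^T) x = ((l^T *m x) 0 0) ^+ 2.
Proof.
rewrite /qf mulmxA -(mulmxA _ l^T x).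
have -> : x^T *m l = (l^T *m x)^T by rewrite trmx_mul trmxK.
set s := l^T *m x.
by rewrite mxE big_ord1 !mxE expr2.
Qed.

End FrobLemmas.

Lemma bsum_mxmul (F : numFieldType) p q s (P : 'M[F]_(p, q)) (T : nat -> 'M[F]_(q, s)) :
  (forall c i, bsum (fun k => T k c i)) ->
  forall a i, bsum (fun k => (P *m T k) a i).
Proof.
move=> h a i; apply: (bsum_eq (@bsum_sum _ _ (index_enum 'I_q) (fun c k => P a c * T k c i) _)).
  by move=> c; exact: bsumZ.
by move=> k; rewrite mxE.
Qed.

Lemma bsum_frob_quad (F : numFieldType) N q (W : nat -> 'M[F]_(N, q)) (M : 'M[F]_N)
  (Z : 'M[F]_q) : (forall a i, bsum (fun k => W k a i)) ->
  bsum (fun k => frob ((W k)^T *m M *m W k) Z).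
Proof.
move=> h; rewrite /frob; apply: bsum_sum => j; apply: bsum_sum => i.
apply: (bsum_eq (bsumZ (Z i j) _)) => [|k]; last exact: mulrC.
apply: (bsum_eq (@bsum_sum _ _ (index_enum 'I_N)
   (fun b k => (\sum_a W k a i * M a b) * W k b j) _)) => [b|k].
  apply: bsumM (h b j); apply: bsum_sum => a.
  by apply: (bsum_eq (bsumZ (M a b) (h a i))) => k; rewrite mulrC.
rewrite mxE; apply: eq_bigr => b _; rewrite mxE; congr (_ * _).
by apply: eq_bigr => a _; rewrite mxE.
Qed.
Unset Implicit Arguments.

Theorem lemma6 (R : realType) (n m r L : nat)
  (A : 'M[R]_n) (B : 'M[R]_(n, m)) (C : 'M[R]_(r, n))
  (hmin : minimal A B C) (hA : schur A)
  (hL : \rank (OL L A C) = n)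
  (P : 'M[R]_(L * m + L * r, L * m + n))
  (hPim : same_image P (ctrb_ioh L A B C))
  (hPorth : P^T *m P = 1%:M)
  (Phi : 'M[R]_(L * m + L * r)) (hPhi : psd Phi)
  (hPhiim : same_image Phi (ctrb_ioh L A B C))
  (Q : 'M[R]_r) (Rw : 'M[R]_m) (hQ : pd Q) (hR : pd Rw)
  (d : measure_display) (T : measurableType d) (Pr : probability T R)
  (v0 : T -> 'cV[R]_(L * m + L * r))
  (hv0 : gaussian_second_moment Pr v0 Phi)
  (K : 'M[R]_(m, L * m + L * r)) :
  schur (P^T *m (Theta L A B C + Pimx R m r L *m K) *m P) <->
  (Jcost Pr v0 A B C Q Rw K < +oo)%E.
Proof.
set Acl0 := Theta L A B C + Pimx R m r L *m K.
set Th := P^T *m Acl0 *m P.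
have [D hD] := @ctrb_stable _ _ _ _ (Theta L A B C) (Pimx R m r L) K P hPim.
have hAP : Acl0 *m P = P *m Th.
  have -> : Th = D by rewrite /Th -mulmxA hD mulmxA hPorth mul1mx.
  exact: hD.
have hAPk k : Acl0 ^+ k *m P = P *m Th ^+ k.
  elim: k => [|k ih]; first by rewrite !expr0 mul1mx mulmx1.
  have -> : Acl0 ^+ k.+1 = Acl0 *m Acl0 ^+ k by rewrite exprS.
  have -> : Th ^+ k.+1 = Th *m Th ^+ k by rewrite exprS.
  by rewrite -mulmxA ih mulmxA hAP -mulmxA.
set Y := C *m Gamma L A B C.
set Mc := Y^T *m Q *m Y + K^T *m Rw *m K.
have qfQ0 y : 0 <= qf Q y.
  have [->|hy] := eqVneq y 0; first by rewrite /qf mulmx0 mxE.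
  exact: ltW (hQ.2 y hy).
have qfR0 y : 0 <= qf Rw y.
  have [->|hy] := eqVneq y 0; first by rewrite /qf mulmx0 mxE.
  exact: ltW (hR.2 y hy).
have hMc w : qf Mc w = qf Q (Y *m w) + qf Rw (K *m w).
  by rewrite qf_sum !qf_congr.
have hq0 w : 0 <= qf Mc w by rewrite hMc addr_ge0.
have hMcT : Mc^T = Mc.
  by rewrite /Mc raddfD /= !trmx_mul !trmxK hQ.1 hR.1 !mulmxA.
have hsc w : stage_cost A B C Q Rw K w = qf Mc w.
  by rewrite hMc /stage_cost /qf /= [LHS]mxE.
set Nk := fun k => (Acl0 ^+ k)^T *m Mc *m Acl0 ^+ k.
have hN k w : qf (Nk k) w = qf Mc (Acl0 ^+ k *m w) by rewrite qf_congr.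
have [_ _ hint] := hv0.
set Ek := fun k => frob (Nk k) Phi.
have Ek0 k : 0 <= Ek k.
  by apply: (moment_nonneg hint) => w; rewrite hN.
have hck k x : stage_cost A B C Q Rw K (Acl0 ^+ k *m v0 x) = qf (Nk k) (v0 x).
  by rewrite hsc hN.
have hJ : Jcost Pr v0 A B C Q Rw K = (\sum_(0 <= k <oo) (Ek k)%:E)%E.
  rewrite /Jcost (@integral_nneseries _ _ _ Pr setT measurableT).
  - apply: eq_eseriesr => k _.
    under eq_integral => x _ do rewrite hck.
    exact: (moment hint).
  - move=> k; apply: (measurable_int Pr).
    apply: (eq_integrable measurableT (fun x => (qf (Nk k) (v0 x))%:E)).
      by move=> x _; rewrite hck.
    exact: (moment_integrable hint).
  - by move=> k x _; rewrite lee_fin hck hN.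
have [hPX hXP] := andP hPim.
have [hPhX hXPh] := andP hPhiim.
rewrite hJ; split.
  move=> hS.
  have hbs := schur_bsum hS.
  have hPhP : (Phi^T <= P^T)%MS := submx_trans hPhX hXP.
  have [U hU] := submxP hPhP.
  have ePhi1 : Phi = P *m U^T by rewrite -[Phi]trmxK hU trmx_mul trmxK.
  have e1 : P *m P^T *m Phi = Phi.
    by rewrite [in LHS]ePhi1 -mulmxA (mulmxA P^T) hPorth mul1mx -ePhi1.
  have e2 : Phi *m P *m P^T = Phi.
    by have := congr1 trmx e1; rewrite !trmx_mul trmxK hPhi.1 mulmxA.
  set Z := P^T *m Phi *m P.
  have ePhi : Phi = P *m Z *m P^T.
    by rewrite /Z !mulmxA e1 e2.
  have eEk k : Ek k = frob ((P *m Th ^+ k)^T *m Mc *m (P *m Th ^+ k)) Z.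
    rewrite /Ek [in LHS]ePhi !frob_tr -hAPk.
    rewrite !mulmxA mxtrace_mulC !mulmxA.
    by rewrite /Nk !trmx_mul !trmxK !mulmxA.
  have hb : bsum Ek.
    apply: (bsum_eq (bsum_frob_quad _ _ _)) => [|k]; last by rewrite eEk.
    exact: (@bsum_mxmul _ _ _ _ P (fun k => Th ^+ k) hbs).
  have [M0 hM0] := hb.
  apply: le_lt_trans (ltry M0).
  apply: lime_le.
    by apply: is_cvg_nneseries => i _ _; rewrite lee_fin.
  apply: nearW => k; rewrite sumEFin lee_fin big_mkord.
  apply: le_trans (hM0 k); apply: ler_sum => i _; exact: ler_norm.
move=> hfin z hz.
rewrite real_ltNge ?normr_real ?real1 //; apply/negP => hz1.
have hz0 : z != 0 by apply: contraTneq hz1 => ->; rewrite normr0 ler10.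
set toC := real_complex R.
have hzT : root (char_poly (map_mx toC Th)^T) z by rewrite char_poly_trmx.
have /eigenvalueP [v hv vnz] : eigenvalue (map_mx toC Th)^T z.
  by rewrite eigenvalue_root_char.
set w := v^T.
have hw : map_mx toC Th *m w = z *: w.
  by have := congr1 trmx hv; rewrite trmx_mul trmxK linearZ.
set vC := map_mx toC P *m w.
have hAv : map_mx toC Acl0 *m vC = z *: vC.
  by rewrite /vC mulmxA -map_mxM hAP map_mxM -mulmxA hw scalemxAr.
have vCnz : vC != 0.
  apply: contraNneq vnz => h0.
  have : (map_mx toC P)^T *m vC = w.
    by rewrite /vC mulmxA map_trmx -map_mxM hPorth map_mx1 mul1mx.
  by rewrite h0 mulmx0 => /(congr1 trmx); rewrite /w trmx0 trmxK => <-.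
set a := map_mx (@complex.Re R) vC.
set b := map_mx (@complex.Im R) vC.
set al := complex.Re z; set be := complex.Im z.
have ha : Acl0 *m a = al *: a - be *: b by rewrite -ReM hAv Re_scale.
have hb : Acl0 *m b = be *: a + al *: b by rewrite -ImM hAv Im_scale.
have inPhi (y : 'cV[R]_(L * m + L * r)) (y' : 'cV[R]_(L * m + n)) :
  y = P *m y' -> exists u, y = Phi *m u.
  move=> ->; have hs : ((P *m y')^T <= Phi^T)%MS.
    rewrite trmx_mul; apply: submx_trans (submxMl _ _) _.
    exact: submx_trans hPX hXPh.
  have [U hU] := submxP hs; exists U^T.
  by rewrite -[LHS]trmxK hU trmx_mul trmxK.
have [ua hua] : exists u, a = Phi *m u by apply: (inPhi _ (map_mx (@complex.Re R) w)); rewrite /a /vC ReM.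
have [ub hub] : exists u, b = Phi *m u by apply: (inPhi _ (map_mx (@complex.Im R) w)); rewrite /b /vC ImM.
have hab2 : 1 <= al ^+ 2 + be ^+ 2.
  rewrite -(@lecR R) add_Re2_Im2; exact: exprn_ege1.
set ak := fun k => Acl0 ^+ k *m a.
set bk := fun k => Acl0 ^+ k *m b.
have hak k : ak k.+1 = al *: ak k - be *: bk k.
  by rewrite /ak /bk exprSr -mulmxA ha mulmxBr -!scalemxAr.
have hbk k : bk k.+1 = be *: ak k + al *: bk k.
  by rewrite /ak /bk exprSr -mulmxA hb mulmxDr -!scalemxAr.
set Sq := fun k => qf Mc (ak k) + qf Mc (bk k).
have hSq k : Sq k.+1 = (al ^+ 2 + be ^+ 2) * Sq k.
  rewrite /Sq hak hbk -scaleNr !qf_comb //; ring.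
set ga := Sq 0%N.
have hSg k : ga <= Sq k.
  elim: k => [|k ih]; first exact: lexx.
  rewrite hSq; have : 0 <= Sq k by rewrite addr_ge0.
  nra.
have gapos : 0 < ga.
  rewrite lt_def addr_ge0 // andbT; apply/negP => /eqP hg0.
  have pdz p (M : 'M[R]_p) (hM : pd M) y : qf M y = 0 -> y = 0.
    move=> hy0; apply/eqP; apply: contraT => hy.
    by have := hM.2 y hy; rewrite /qf in hy0; rewrite hy0 ltxx.
  have hzero y : qf Mc y = 0 -> Y *m y = 0 /\ K *m y = 0.
    move=> /eqP; rewrite hMc paddr_eq0 // => /andP[/eqP h1 /eqP h2].
    by split; [exact: pdz _ _ hQ _ h1 | exact: pdz _ _ hR _ h2].
  move: hg0; rewrite /ga /Sq /ak /bk expr0 !mul1mx.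
  move=> /eqP; rewrite paddr_eq0 // => /andP[/eqP qa0 /eqP qb0].
  set G := Emx R m r L *m C *m Gamma L A B C + Pimx R m r L *m K.
  have hG y : qf Mc y = 0 -> G *m y = 0.
    move=> /hzero [h1 h2]; rewrite mulmxDl.
    have -> : Emx R m r L *m C *m Gamma L A B C *m y = Emx R m r L *m (Y *m y).
      by rewrite /Y !mulmxA.
    by rewrite -mulmxA h1 h2 !mulmx0 addr0.
  set Sb := block_mx (Sk R L m) 0 0 (Sk R L r).
  have hAS : Acl0 = Sb + G by rewrite /Acl0 /Theta -addrA.
  have hGv : map_mx toC G *m vC = 0.
    apply: cmx_eq0; [rewrite ReM; exact: hG | rewrite ImM; exact: hG].
  have hSv : map_mx toC Sb *m vC = z *: vC.
    by rewrite -hAv hAS map_mxD mulmxDl hGv addr0.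
  have hSj j : map_mx toC Sb ^+ j *m vC = z ^+ j *: vC.
    elim: j => [|j ih]; first by rewrite !expr0 mul1mx scale1r.
    by rewrite exprSr -mulmxA hSv -scalemxAr ih scalerA -exprS.
  have hSN : map_mx toC Sb ^+ (L * m + L * r) = 0.
    rewrite -map_mxX_gen (supper_nil (block_supper (@Sk_supper R L m) (@Sk_supper R L r))).
    by rewrite map_mx0.
  have := hSj (L * m + L * r); rewrite hSN mul0mx => /esym/eqP.
  by rewrite scaler_eq0 expf_eq0 (negbTE hz0) andbF (negbTE vCnz).
have key k u : qf Mc (Acl0 ^+ k *m (Phi *m u)) <= Ek k * qf Phi u.
  set x := Acl0 ^+ k *m (Phi *m u).
  set l := (Acl0 ^+ k)^T *m Mc *m x.
  have hlw y : (l^T *m y) 0 0 = bl Mc x (Acl0 ^+ k *m y).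
    by rewrite /l /bl !trmx_mul trmxK hMcT !mulmxA.
  have h1 : 0 <= qf Mc x * Ek k - qf Phi l.
    rewrite -(frob_outer l Phi) /Ek -frobZ -frobB.
    apply: (moment_nonneg hint) => y.
    rewrite qfB qfZ qf_outer hN hlw subr_ge0.
    exact: CS.
  have h2 : bl Phi l u ^+ 2 <= qf Phi l * qf Phi u.
    by apply: CS; [exact: hPhi.1 | exact: hPhi.2].
  have hbl : bl Phi l u = qf Mc x.
    by rewrite /bl /l /qf !trmx_mul trmxK hMcT !mulmxA.
  have hPu : 0 <= qf Phi u := hPhi.2 u.
  have hqx := hq0 x.
  have hE := Ek0 k.
  rewrite hbl in h2.
  have h3 : qf Phi l * qf Phi u <= qf Mc x * Ek k * qf Phi u.
    by apply: ler_wpM2r => //; rewrite -subr_ge0.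
  have [qx0|qxp] := eqVneq (qf Mc x) 0; first by rewrite qx0; exact: mulr_ge0.
  have qxpos : 0 < qf Mc x by rewrite lt_def qxp hqx.
  rewrite -(ler_pM2l qxpos) mulrA -expr2.
  exact: le_trans h2 h3.
have phi0 u : 0 <= qf Phi u := hPhi.2 u.
have hbnd k : ga <= Ek k * (qf Phi ua + qf Phi ub).
  apply: le_trans (hSg k) _; rewrite mulrDr /Sq /ak /bk.
  by apply: lerD; [rewrite hua | rewrite hub]; exact: key.
set ph := qf Phi ua + qf Phi ub.
have php : 0 < ph.
  rewrite lt_def (addr_ge0 (phi0 ua) (phi0 ub)) andbT.
  by apply: contraTneq (hbnd 0%N) => h0; rewrite -/ph h0 mulr0 -ltNge.
set eta := ga / ph.
have etap : 0 < eta by rewrite divr_gt0.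
have hE k : eta <= Ek k by rewrite ler_pdivrMr // (hbnd k).
have hsum nn : ((nn%:R * eta)%:E <= \sum_(0 <= k <oo) (Ek k)%:E)%E.
  apply: le_trans (@nneseries_lim_ge R (fun k => (Ek k)%:E) xpredT 0 nn _); last first.
    by move=> i _ _; rewrite lee_fin.
  rewrite sumEFin lee_fin.
  have -> : nn%:R * eta = \sum_(0 <= i < nn) eta by rewrite sumr_const_nat subn0 mulr_natl.
  by apply: ler_sum => i _; exact: hE.
have hge : (0 <= \sum_(0 <= k <oo) (Ek k)%:E)%E.
  by apply: nneseries_ge0 => i _ _; rewrite lee_fin.
have hfn : (\sum_(0 <= k <oo) (Ek k)%:E)%E \is a fin_num by rewrite ge0_fin_numE.
set Jr := fine (\sum_(0 <= k <oo) (Ek k)%:E)%E.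
have eJ : (\sum_(0 <= k <oo) (Ek k)%:E)%E = Jr%:E by rewrite fineK.
have := hsum (Num.truncn (Jr / eta)).+1; rewrite eJ lee_fin.
have := truncnS_gt (Jr / eta); rewrite ltr_pdivrMr // => h1 h2.
by have := lt_le_trans h1 h2; rewrite ltxx.
Qed.
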